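(* Let $n\ge2$, $N\ge2n+1$, $\alpha_2,\dots,\alpha_n$ real, $\alpha_1=1$. Consider the open ($k=-1$) $N$-dimensional metric $ds^2=-dt^2+a(t)^2\left(\frac{dr^2}{1+r^2}+r^2d\Omega_{N-2}^2\right)$ and the pressure ($p$) component of the Lovelock field equations with $p=0$, namely $$-(N-2)\left(\frac{N-3}{2}\Big(\frac{\dot a^2}{a^2}-\frac{1}{a^2}\Big)+\frac{\ddot a}{a}\right)+\sum_{i=2}^{n}\alpha_i\left[{}^{(i)}k_{11}\Big(\frac{\dot a^2}{a^2}-\frac{1}{a^2}\Big)^i+{}^{(i)}k_{12}\,\frac{\ddot a}{a}\Big(\frac{\dot a^2}{a^2}-\frac{1}{a^2}\Big)^{i-1}\right]=0 .$$ Let $C_1$ be a real root of $2-N+\sum_{i=2}^n\alpha_i\,{}^{(i)}k_{12}\,\frac{C_1^{i-1}}{i}=0$ (equivalently a nonzero root of $\sum_{i=1}^n\alpha_i\,{}^{(i)}k_{12}\,C_1^i/i=0$, with ${}^{(1)}k_{12}=-(N-2)$). Then $$a(t)=\frac{1}{\sqrt{C_1}}\sinh\big(\sqrt{C_1}\,t\big)=\sum_{j\ge0}\frac{C_1^{\,j}\,t^{2j+1}}{(2j+1)!}$$ is a solution of this pressure-free equation with $a(0)=0$.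
   Context: Dots denote $d/dt$ ($t$ cosmic time). This equation is the spatial ($p$) component of the Lovelock field equations $\sum_i\alpha_i\,{}^{(i)}\mathcal{H}^a_{\ b}=T^a_{\ b}$ for a perfect fluid in the FRW metric. Coefficients (binomial coefficients $\binom{a}{b}$, zero when $b<0$): ${}^{(i)}k_{11}=-\tfrac12(2(i-1))!\,(N-2)(N-1-2i)\binom{N-3}{2(i-1)}$, ${}^{(i)}k_{12}=-\tfrac12(2(i-1))!\left[2(N-i-1)\binom{N-2}{2(i-1)}+(N-2)(N-1-2i)\binom{N-3}{2i-3}\right]$. *)

(* Defs.v *)
From Stdlib Require Import Reals Lra Lia ZArith List.
From Coquelicot Require Import Coquelicot.
Open Scope R_scope.

Fixpoint binom (n k : nat) : nat :=
  match n, k with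
  | _, O => 1%nat
  | O, S _ => 0%nat
  | S n', S k' => (binom n' k' + binom n' (S k'))%nat
  end.

Definition binZ (a : nat) (b : Z) : R :=
  if (b <? 0)%Z then 0 else INR (binom a (Z.to_nat b)).

Definition k11 (N i : nat) : R :=
  - / 2 * INR (fact (2 * (i - 1))) * (INR N - 2) * (INR N - 1 - 2 * INR i)
    * binZ (N - 3) (2 * (Z.of_nat i - 1))%Z.

Definition k12 (N i : nat) : R :=
  - / 2 * INR (fact (2 * (i - 1))) *
    (2 * (INR N - INR i - 1) * binZ (N - 2) (2 * (Z.of_nat i - 1))%Z
     + (INR N - 2) * (INR N - 1 - 2 * INR i) * binZ (N - 3) (2 * Z.of_nat i - 3)%Z).

Definition sumRange (lo hi : nat) (f : nat -> R) : R :=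
  fold_right Rplus 0 (map f (seq lo (S hi - lo))).

(* LHS of the pressure (p) component of the Lovelock equations, k = -1,
   with alpha_1 = 1 written out explicitly, given a, adot, addot at time t *)
Definition lovelock_p (N n : nat) (alpha : nat -> R) (a ad add : R) : R :=
  let H := ad ^ 2 / a ^ 2 - 1 / a ^ 2 in
  - (INR N - 2) * ((INR N - 3) / 2 * H + add / a)
  + sumRange 2 n (fun i => alpha i *
       (k11 N i * H ^ i + k12 N i * (add / a) * H ^ (i - 1))).

Definition a_sol (C : R) (t : R) : R :=
  Series (fun j => C ^ j * t ^ (2 * j + 1) / INR (fact (2 * j + 1))).

(* Main.v *)
Require Import Defs.
From Stdlib Require Import Reals Lra Lia ZArith List Arith FunctionalExtensionality.
From Coquelicot Require Import Coquelicot.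
Open Scope R_scope.

Lemma binom_abs (n : nat) : forall k,
  ((k+1) * binom n (k+1) + k * binom n k = n * binom n k)%nat.
Proof.
  induction n as [|n IH]; intros k.
  - destruct k; simpl; lia.
  - destruct k as [|k].
    + assert (H1 : forall m, binom m 1 = m).
      { induction m; simpl; [lia|]. destruct m; simpl in *; lia. }
      rewrite H1. simpl. lia.
    + replace (S k + 1)%nat with (S (S k)) by lia.
      cbn [binom]. pose proof (IH k) as H0. pose proof (IH (S k)) as H1.
      replace (k+1)%nat with (S k) in H0 by lia.
      replace (S k + 1)%nat with (S (S k)) in H1 by lia.
      nia.
Qed.

Lemma binZ_nat a k : binZ a (Z.of_nat k) = INR (binom a k).
Proof.
  unfold binZ. destruct (Z.ltb_spec (Z.of_nat k) 0); [lia|].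
  now rewrite Nat2Z.id.
Qed.

Lemma kid N i : (2 <= i)%nat -> (2*i+1 <= N)%nat ->
  k11 N i + k12 N i = (INR N - 1) / (2 * INR i) * k12 N i.
Proof.
  intros Hi HN.
  destruct (Nat.le_exists_sub 2 i Hi) as [j [Hj _]].
  assert (Hm : exists m, N = (m + 3)%nat /\ (2*j+2 <= m)%nat)
    by (exists (N-3)%nat; lia).
  destruct Hm as [m [Hm Hjm]]. subst i N.
  unfold k11, k12.
  replace (2 * (Z.of_nat (j + 2) - 1))%Z with (Z.of_nat (2*j+2)) by lia.
  replace (2 * Z.of_nat (j + 2) - 3)%Z with (Z.of_nat (2*j+1)) by lia.
  rewrite !binZ_nat.
  replace (m + 3 - 3)%nat with m by lia.
  replace (m + 3 - 2)%nat with (S m) by lia.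
  replace (2*j+2)%nat with (S (2*j+1)) by lia.
  cbn [binom].
  pose proof (binom_abs m (2*j+1)) as Hb.
  replace (2*j+1+1)%nat with (S (2*j+1)) in Hb by lia.
  apply (f_equal INR) in Hb. rewrite !plus_INR, !mult_INR in Hb.
  rewrite !plus_INR.
  set (X := INR (binom m (S (2*j+1)))) in *.
  set (B := INR (binom m (2*j+1))) in *.
  set (F := INR (fact _)).
  repeat rewrite ?S_INR, ?plus_INR, ?mult_INR in *. change (INR 2) with (1+1) in *. change (INR 1) with 1 in *. change (INR 0) with 0 in *.
  assert (HX : X = (INR m - 2 * INR j - 1) * B / (2 * INR j + 2)).
  { assert (0 <= INR j) by apply pos_INR. field_simplify_eq; [|lra].
    lra. }
  rewrite HX. assert (0 <= INR j) by apply pos_INR. field. lra.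
Qed.

Lemma exp_radius : CV_radius (fun n => / INR (fact n)) = p_infty.
Proof.
  apply CV_radius_infinite_DAlembert.
  - intros n. apply Rinv_neq_0_compat, INR_fact_neq_0.
  - apply is_lim_seq_ext with (fun n => / INR (S n)).
    + intros n. change (fact (S n)) with (S n * fact n)%nat.
      rewrite mult_INR. pose proof (INR_fact_lt_0 n).
      assert (0 < INR (S n)) by (apply lt_0_INR; lia).
      rewrite Rabs_right.
      * field. lra.
      * apply Rle_ge. unfold Rdiv. rewrite Rinv_inv.
        apply Rmult_le_pos; [left; apply Rinv_0_lt_compat; nra | lra].
    + replace (Finite 0) with (Rbar_inv p_infty) by reflexivity.
      apply is_lim_seq_inv; [|discriminate].
      apply (is_lim_seq_incr_1 INR p_infty), is_lim_seq_INR.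
Qed.

Lemma disk_of_bound (s : nat -> R) (D : R) : 0 <= D ->
  (forall n, Rabs (s n) <= D ^ n / INR (fact n)) -> forall x, CV_disk s x.
Proof.
  intros HD Hs x.
  assert (He : CV_disk (fun n => / INR (fact n)) (D * Rabs x)).
  { apply CV_disk_inside. rewrite exp_radius. exact I. }
  unfold CV_disk in *.
  refine (@ex_series_le R_AbsRing R_CompleteNormedModule _ _ _ He).
  intros n. unfold norm; simpl; unfold abs; simpl. change (Rabs (Rabs (s n * x ^ n)) <= Rabs (/ INR (fact n) * (D * Rabs x) ^ n)).
  pose proof (INR_fact_lt_0 n).
  assert (0 <= Rabs x ^ n) by (apply pow_le, Rabs_pos).
  assert (0 <= D ^ n) by (apply pow_le; lra).
  assert (0 < / INR (fact n)) by (apply Rinv_0_lt_compat; lra).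
  rewrite Rabs_Rabsolu, Rabs_mult, <- RPow_abs, Rpow_mult_distr.
  rewrite (Rabs_right (/ INR (fact n) * (D ^ n * Rabs x ^ n))) by (apply Rle_ge; apply Rmult_le_pos; [lra|]; apply Rmult_le_pos; lra).
  specialize (Hs n). unfold Rdiv in Hs.
  assert (0 <= Rabs x ^ n) by (apply pow_le, Rabs_pos).
  nra.
Qed.

Lemma radius_of_disk (s : nat -> R) : (forall x, CV_disk s x) -> CV_radius s = p_infty.
Proof.
  intros H. unfold CV_radius.
  destruct (Lub_Rbar_correct (CV_disk s)) as [Hub _].
  destruct (Lub_Rbar (CV_disk s)) as [l| |] eqn:E; auto.
  - specialize (Hub (l+1) (H _)). simpl in Hub. lra.
  - specialize (Hub 0 (H _)). simpl in Hub. contradiction.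
Qed.

Definition cA (C : R) (n : nat) : R :=
  if Nat.odd n then C ^ Nat.div2 n / INR (fact n) else 0.
Definition cC (C : R) (n : nat) : R :=
  if Nat.even n then C ^ Nat.div2 n / INR (fact n) else 0.

Lemma even2 m : Nat.even (2*m) = true.
Proof. induction m; [reflexivity|]. replace (2 * S m)%nat with (S (S (2*m))) by lia. exact IHm. Qed.
Lemma even2S m : Nat.even (2*m+1) = false.
Proof. induction m; [reflexivity|]. replace (2 * S m + 1)%nat with (S (S (2*m+1))) by lia. exact IHm. Qed.
Lemma odd2 m : Nat.odd (2*m) = false.
Proof. unfold Nat.odd. now rewrite even2. Qed.
Lemma odd2S m : Nat.odd (2*m+1) = true.
Proof. unfold Nat.odd. now rewrite even2S. Qed.
Lemma div2S m : Nat.div2 (2*m+1) = m.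
Proof. replace (2*m+1)%nat with (S (2*m)) by lia. apply Nat.div2_succ_double. Qed.

Lemma cA_e C m : cA C (2*m) = 0.
Proof. unfold cA. now rewrite odd2. Qed.
Lemma cA_o C m : cA C (2*m+1) = C ^ m / INR (fact (2*m+1)).
Proof. unfold cA. now rewrite odd2S, div2S. Qed.
Lemma cC_e C m : cC C (2*m) = C ^ m / INR (fact (2*m)).
Proof. unfold cC. now rewrite even2, Nat.div2_double. Qed.
Lemma cC_o C m : cC C (2*m+1) = 0.
Proof. unfold cC. now rewrite even2S. Qed.

Lemma bound0 C k n :
  Rabs (C ^ k / INR (fact n)) <= (1 + Rabs C) ^ k / INR (fact n).
Proof.
  pose proof (INR_fact_lt_0 n).
  unfold Rdiv. rewrite Rabs_mult, <- RPow_abs.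
  rewrite (Rabs_right (/ INR (fact n))) by (left; apply Rinv_0_lt_compat; lra).
  apply Rmult_le_compat_r; [left; apply Rinv_0_lt_compat; lra|].
  apply pow_incr. split; [apply Rabs_pos|lra].
Qed.

Lemma bound_gen C k n : (k <= n)%nat ->
  Rabs (C ^ k / INR (fact n)) <= (1 + Rabs C) ^ n / INR (fact n).
Proof.
  intros Hk. pose proof (INR_fact_lt_0 n).
  unfold Rdiv. rewrite Rabs_mult, <- RPow_abs.
  rewrite (Rabs_right (/ INR (fact n))) by (left; apply Rinv_0_lt_compat; lra).
  apply Rmult_le_compat_r; [left; apply Rinv_0_lt_compat; lra|].
  apply Rle_trans with ((1 + Rabs C) ^ k).
  - apply pow_incr. split; [apply Rabs_pos|lra].
  - apply Rle_pow; [pose proof (Rabs_pos C); lra | exact Hk].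
Qed.

Lemma cA_radius C : CV_radius (cA C) = p_infty.
Proof.
  apply radius_of_disk. apply (disk_of_bound _ (1 + Rabs C)).
  { pose proof (Rabs_pos C); lra. }
  intros n. destruct (Nat.Even_or_Odd n) as [[m ->]|[m ->]].
  - rewrite cA_e, Rabs_R0. apply Rmult_le_pos; [apply pow_le; pose proof (Rabs_pos C); lra|].
    left; apply Rinv_0_lt_compat, INR_fact_lt_0.
  - rewrite cA_o. apply bound_gen. lia.
Qed.

Lemma cC_radius C : CV_radius (cC C) = p_infty.
Proof.
  apply radius_of_disk. apply (disk_of_bound _ (1 + Rabs C)).
  { pose proof (Rabs_pos C); lra. }
  intros n. destruct (Nat.Even_or_Odd n) as [[m ->]|[m ->]].
  - rewrite cC_e. apply bound_gen. lia.
  - rewrite cC_o, Rabs_R0. apply Rmult_le_pos; [apply pow_le; pose proof (Rabs_pos C); lra|].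
    left; apply Rinv_0_lt_compat, INR_fact_lt_0.
Qed.

Lemma odd_part_disk C : forall x, CV_disk (fun n => C ^ n / INR (fact (2*n+1))) x.
Proof.
  apply (disk_of_bound _ (1 + Rabs C)).
  { pose proof (Rabs_pos C); lra. }
  intros n. eapply Rle_trans; [apply (bound0 C n (2*n+1))|].
  pose proof (INR_fact_lt_0 n). pose proof (INR_fact_lt_0 (2*n+1)).
  unfold Rdiv. apply Rmult_le_compat_l; [apply pow_le; pose proof (Rabs_pos C); lra|].
  apply Rinv_le_contravar; [lra|]. apply le_INR, fact_le. lia.
Qed.

Lemma derive_cA C n : PS_derive (cA C) n = cC C n.
Proof.
  unfold PS_derive. destruct (Nat.Even_or_Odd n) as [[m ->]|[m ->]].
  - replace (S (2*m)) with (2*m+1)%nat by lia. rewrite cA_o, cC_e.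
    replace (fact (2*m+1)) with ((2*m+1) * fact (2*m))%nat
      by (replace (2*m+1)%nat with (S (2*m)) by lia; reflexivity).
    rewrite mult_INR. pose proof (INR_fact_lt_0 (2*m)).
    assert (0 < INR (2*m+1)) by (apply lt_0_INR; lia).
    field. lra.
  - replace (S (2*m+1)) with (2*(S m))%nat by lia. rewrite cA_e, cC_o. ring.
Qed.

Lemma derive_cC C n : PS_derive (cC C) n = C * cA C n.
Proof.
  unfold PS_derive. destruct (Nat.Even_or_Odd n) as [[m ->]|[m ->]].
  - replace (S (2*m)) with (2*m+1)%nat by lia. rewrite cA_e, cC_o. ring.
  - replace (S (2*m+1)) with (2*(S m))%nat by lia. rewrite cA_o, cC_e.
    replace (fact (2*S m)) with ((2*S m) * fact (2*m+1))%nat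
      by (replace (2*S m)%nat with (S (2*m+1)) by lia; reflexivity).
    rewrite !mult_INR. pose proof (INR_fact_lt_0 (2*m+1)).
    assert (0 < INR 2) by (apply lt_0_INR; lia).
    assert (0 < INR (S m)) by (apply lt_0_INR; lia).
    rewrite <- tech_pow_Rmult. field. lra.
Qed.

Lemma a_sol_eq C : a_sol C = PSeries (cA C).
Proof.
  apply functional_extensionality. intros t.
  rewrite PSeries_odd_even.
  - rewrite (PSeries_ext _ (fun _ => 0)) by (intros; apply cA_e).
    rewrite PSeries_const_0, Rplus_0_l.
    unfold PSeries. rewrite <- Series_scal_l. unfold a_sol.
    apply Series_ext. intros n. rewrite cA_o.
    rewrite <- pow_mult, pow_add. simpl pow. pose proof (INR_fact_lt_0 (2*n+1)). field. lra.
  - apply (ex_pseries_ext (fun _ => 0)); [intros; symmetry; apply cA_e|].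
    apply CV_radius_inside. rewrite CV_radius_const_0. exact I.
  - apply (ex_pseries_ext (fun n => C ^ n / INR (fact (2*n+1)))); [intros; symmetry; apply cA_o|].
    apply CV_disk_correct, odd_part_disk.
Qed.

Lemma dA C t : is_derive (PSeries (cA C)) t (PSeries (cC C) t).
Proof.
  rewrite <- (PSeries_ext _ _ _ (derive_cA C)).
  apply is_derive_PSeries. rewrite cA_radius. exact I.
Qed.

Lemma dC C t : is_derive (PSeries (cC C)) t (C * PSeries (cA C) t).
Proof.
  rewrite <- PSeries_scal.
  rewrite (PSeries_ext (PS_scal C (cA C)) (PS_derive (cC C))).
  - apply is_derive_PSeries. rewrite cC_radius. exact I.
  - intros n. rewrite derive_cC. reflexivity.
Qed.

Lemma ident C t : PSeries (cC C) t ^ 2 - C * PSeries (cA C) t ^ 2 = 1.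
Proof.
  set (g := fun x => PSeries (cC C) x ^ 2 - C * PSeries (cA C) x ^ 2).
  assert (Hg : forall x, is_derive g x 0).
  { intros x. unfold g.
    pose proof (is_derive_pow _ 2 _ _ (dC C x)) as H1.
    pose proof (is_derive_scal _ _ C _ (is_derive_pow _ 2 _ _ (dA C x))) as H2.
    pose proof (@is_derive_minus R_AbsRing R_NormedModule _ _ _ _ _ H1 H2) as H3.
    simpl in H3.
    replace 0 with (minus (INR 2 * (C * PSeries (cA C) x) * PSeries (cC C) x ^ 1)
       (C * (INR 2 * PSeries (cC C) x * PSeries (cA C) x ^ 1))).
    - exact H3.
    - unfold minus, plus, opp; simpl. change (INR 2) with 2. ring. }
  assert (H0 : g 0 = 1).
  { unfold g. rewrite !PSeries_0. unfold cC, cA. simpl. field. }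
  change (g t = 1). rewrite <- H0.
  destruct (Rtotal_order t 0) as [Hl|[He|Hr]].
  - apply eq_is_derive; [intros; apply Hg | exact Hl].
  - now subst.
  - symmetry. apply eq_is_derive; [intros; apply Hg | exact Hr].
Qed.

Lemma sumRange_ext_in lo hi f g :
  (forall i, (lo <= i <= hi)%nat -> f i = g i) -> sumRange lo hi f = sumRange lo hi g.
Proof.
  intros H. unfold sumRange. f_equal. apply map_ext_in.
  intros i Hi. apply in_seq in Hi. apply H. lia.
Qed.

Lemma sumRange_scal lo hi k f :
  sumRange lo hi (fun i => k * f i) = k * sumRange lo hi f.
Proof.
  unfold sumRange. induction (seq lo (S hi - lo)) as [|x l IH]; simpl.
  - ring.
  - rewrite IH. ring.
Qed.

Theorem mainTheorem4 (n N : nat) (alpha : nat -> R) (C1 : R) :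
  (2 <= n)%nat -> (2 * n + 1 <= N)%nat -> alpha 1%nat = 1 ->
  2 - INR N + sumRange 2 n (fun i => alpha i * k12 N i * C1 ^ (i - 1) / INR i) = 0 ->
  a_sol C1 0 = 0 /\
  (forall t, ex_derive (a_sol C1) t /\ ex_derive (Derive (a_sol C1)) t) /\
  (forall t, a_sol C1 t <> 0 ->
     lovelock_p N n alpha (a_sol C1 t) (Derive (a_sol C1) t)
       (Derive (Derive (a_sol C1)) t) = 0).
Proof.
  intros Hn HN Ha1 Hsum.
  rewrite a_sol_eq.
  assert (HD1 : Derive (PSeries (cA C1)) = PSeries (cC C1)).
  { apply functional_extensionality. intros t. apply is_derive_unique, dA. }
  rewrite HD1.
  split; [|split].
  - rewrite PSeries_0. reflexivity.
  - intros t. split; eexists; [apply dA | apply dC].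
  - intros t Hat.
    rewrite (is_derive_unique _ _ _ (dC C1 t)).
    pose proof (ident C1 t) as Hid.
    set (a := PSeries (cA C1) t) in *. set (c := PSeries (cC C1) t) in *.
    unfold lovelock_p. cbv zeta.
    replace (c ^ 2 / a ^ 2 - 1 / a ^ 2) with C1
      by (field_simplify_eq; [|exact Hat]; lra).
    replace (C1 * a / a) with C1 by (field; exact Hat).
    rewrite (sumRange_ext_in _ _ _
      (fun i => ((INR N - 1) / 2 * C1) * (alpha i * k12 N i * C1 ^ (i - 1) / INR i))).
    + rewrite sumRange_scal.
      assert (HS : sumRange 2 n (fun i => alpha i * k12 N i * C1 ^ (i - 1) / INR i) = INR N - 2) by lra.
      rewrite HS. field.
    + intros i Hi.
      pose proof (kid N i ltac:(lia) ltac:(lia)) as Hk.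
      assert (Hi0 : 0 < INR i) by (apply lt_0_INR; lia).
      replace (C1 ^ i) with (C1 * C1 ^ (i - 1))
        by (destruct i as [|i']; [lia|]; simpl; rewrite Nat.sub_0_r; reflexivity).
      replace (k11 N i) with ((INR N - 1) / (2 * INR i) * k12 N i - k12 N i) by lra.
      field. lra.
Qed.
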